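(* Let $f=f(n)>0$ and suppose $f\in O(1/n)$. Then $$O\left(\frac{n^8f^2+n^2}{n^{15}f^7+n^3f^3}+\frac{n^{13}f^3+n^4}{n^{23}f^9+n^2f^2}+\sum_{k=3}^{n-1}\frac{k^3n^{12}(n-k)^3f^3+k^9n^6}{n^{16}(n-k)^9f^9+k^{16}(n-k)f}\right)\le O\left(\frac{\ln(n)}{nf}+\frac1{n^4f^4}\right).$$ Moreover, if $f\in o(1/n^3)$, then the left-hand side is $O\left(\frac1{nf^3}\right)$.
   Context: Asymptotic notation refers to $n\to\infty$. *)

(* Defs.v *)
From Stdlib Require Import Reals Lra Lia List.
Open Scope R_scope.

Definition bigO (g h : nat -> R) : Prop :=
  exists C : R, exists N : nat, forall n : nat, (N <= n)%nat ->
    Rabs (g n) <= C * Rabs (h n).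

Definition littleo (g h : nat -> R) : Prop :=
  forall eps : R, 0 < eps -> exists N : nat, forall n : nat, (N <= n)%nat ->
    Rabs (g n) <= eps * Rabs (h n).

(* sum_{k=a}^{b} F k  (empty, = 0, when b < a) *)
Definition sum_range (a b : nat) (F : nat -> R) : R :=
  fold_right Rplus 0 (map F (seq a (S b - a))).

Definition lhs17 (f : nat -> R) (m : nat) : R :=
  let n := INR m in
  let x := f m in
  (n ^ 8 * x ^ 2 + n ^ 2) / (n ^ 15 * x ^ 7 + n ^ 3 * x ^ 3)
  + (n ^ 13 * x ^ 3 + n ^ 4) / (n ^ 23 * x ^ 9 + n ^ 2 * x ^ 2)
  + sum_range 3 (m - 1) (fun j =>
      let k := INR j in
      let nk := INR (m - j) in
      (k ^ 3 * n ^ 12 * nk ^ 3 * x ^ 3 + k ^ 9 * n ^ 6)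
      / (n ^ 16 * nk ^ 9 * x ^ 9 + k ^ 16 * nk * x)).

(* Main.v *)
Require Import Defs.
From Stdlib Require Import Reals Lra Lia List.
Open Scope R_scope.

Ltac pos := repeat (match goal with
 | H : 0 < ?a |- 0 < ?a => exact H
 | |- 0 < _ * _ => apply Rmult_lt_0_compat
 | |- 0 < _ + _ => apply Rplus_lt_0_compat
 | |- 0 < _ ^ _ => apply pow_lt
 | |- 0 < / _ => apply Rinv_0_lt_compat
 | |- 0 < _ / _ => apply Rdiv_lt_0_compat
 end); try assumption; try lra.

Ltac nneg := repeat (match goal with
 | H : 0 <= ?a |- 0 <= ?a => exact H
 | |- 0 <= _ * _ => apply Rmult_le_pos
 | |- 0 <= _ + _ => apply Rplus_le_le_0_compat
 | |- 0 <= _ ^ _ => apply pow_le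
 | |- 0 <= / _ => apply Rlt_le, Rinv_0_lt_compat
 | |- 0 <= _ / _ => unfold Rdiv; apply Rmult_le_pos
 end); try assumption; try lra.

Definition lsum (F : nat -> R) (l : list nat) : R := fold_right Rplus 0 (map F l).

Lemma lsum_le F G l : (forall k, In k l -> F k <= G k) -> lsum F l <= lsum G l.
Proof.
  induction l as [|a l IH]; intros H; unfold lsum in *; simpl; [lra|].
  apply Rplus_le_compat. apply H; simpl; auto. apply IH; intros; apply H; simpl; auto.
Qed.

Lemma lsum_plus F G l : lsum (fun k => F k + G k) l = lsum F l + lsum G l.
Proof. induction l; unfold lsum in *; simpl; [lra|]. rewrite IHl; lra. Qed.

Lemma lsum_scal c F l : lsum (fun k => c * F k) l = c * lsum F l.
Proof. induction l; unfold lsum in *; simpl; [lra|]. rewrite IHl; lra. Qed.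

Lemma lsum_const c l : lsum (fun _ => c) l = INR (length l) * c.
Proof. induction l; unfold lsum in *; simpl length; [simpl; lra|].
  rewrite S_INR. simpl. unfold lsum in IHl. rewrite IHl; lra. Qed.

Lemma lsum_tele g a L : lsum (fun k => g k - g (S k)) (seq a L) = g a - g (a + L)%nat.
Proof.
  revert a; induction L; intros a; unfold lsum in *; simpl.
  - rewrite Nat.add_0_r; lra.
  - rewrite IHL. replace (S a + L)%nat with (a + S L)%nat by lia. lra.
Qed.

Lemma lsum_nonneg F l : (forall k, In k l -> 0 <= F k) -> 0 <= lsum F l.
Proof.
  intros H. apply Rle_trans with (lsum (fun _ => 0) l).
  - rewrite lsum_const; lra.
  - apply lsum_le; auto.
Qed.

Lemma frac_le a a' b b' : 0 <= a <= a' -> 0 < b' <= b -> a / b <= a' / b'.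
Proof.
  intros [H1 H2] [H3 H4]. unfold Rdiv.
  apply Rmult_le_compat; auto. nneg. apply Rinv_le_contravar; lra.
Qed.

Lemma div_le_iff a b c d : 0 < b -> 0 < d -> a * d <= c * b -> a / b <= c / d.
Proof.
  intros hb hd h. apply (Rmult_le_reg_r (b * d)). pos.
  replace (a / b * (b * d)) with (a * d) by (field; lra).
  replace (c / d * (b * d)) with (c * b) by (field; lra). lra.
Qed.

Lemma T1a n x : 0 < n -> 0 < x ->
  (n ^ 8 * x ^ 2 + n ^ 2) / (n ^ 15 * x ^ 7 + n ^ 3 * x ^ 3) <= 2 / (n ^ 4 * x ^ 4).
Proof.
  intros hn hx. apply div_le_iff; try pos.
  set (w := n^3 * x). assert (hw : 0 < w) by (unfold w; pos).
  replace ((n ^ 8 * x ^ 2 + n ^ 2) * (n ^ 4 * x ^ 4)) with ((n^3*x^3) * (w^3 + w)) by (unfold w; ring).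
  replace (2 * (n ^ 15 * x ^ 7 + n ^ 3 * x ^ 3)) with ((n^3*x^3) * (2*(w^4+1))) by (unfold w; ring).
  apply Rmult_le_compat_l; [nneg|]. clearbody w. nra.
Qed.

Lemma T1b n x : 0 < n -> 0 < x -> n^3 * x <= 1 ->
  (n ^ 8 * x ^ 2 + n ^ 2) / (n ^ 15 * x ^ 7 + n ^ 3 * x ^ 3) <= 2 / (n * x ^ 3).
Proof.
  intros hn hx hw1. apply div_le_iff; try pos.
  set (w := n^3 * x) in *. assert (hw : 0 < w) by (unfold w; pos).
  replace ((n ^ 8 * x ^ 2 + n ^ 2) * (n * x ^ 3)) with ((n^3*x^3) * (w^2 + 1)) by (unfold w; ring).
  replace (2 * (n ^ 15 * x ^ 7 + n ^ 3 * x ^ 3)) with ((n^3*x^3) * (2*(w^4+1))) by (unfold w; ring).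
  apply Rmult_le_compat_l; [nneg|]. clearbody w. nra.
Qed.

Lemma pw1 w k : 0 <= w <= 1 -> w ^ k <= 1.
Proof. intros h. rewrite <- (pow1 k). apply pow_incr; lra. Qed.

Lemma pwle w a b : 1 <= w -> (a <= b)%nat -> w ^ a <= w ^ b.
Proof. intros; apply Rle_pow; auto. Qed.

Lemma pwnn w k : 0 <= w -> 0 <= w ^ k.
Proof. intros; apply pow_le; auto. Qed.

Lemma T2a n x : 0 < n -> 0 < x ->
  (n ^ 13 * x ^ 3 + n ^ 4) / (n ^ 23 * x ^ 9 + n ^ 2 * x ^ 2) <= 2 / (n ^ 4 * x ^ 4).
Proof.
  intros hn hx. apply div_le_iff; try pos.
  set (w := n^3 * x). assert (hw : 0 < w) by (unfold w; pos).
  replace ((n ^ 13 * x ^ 3 + n ^ 4) * (n ^ 4 * x ^ 4)) with ((n^2*x^2) * (w^5 + w^2)) by (unfold w; ring).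
  replace (2 * (n ^ 23 * x ^ 9 + n ^ 2 * x ^ 2)) with ((n^2*x^2) * (2*(w^7+1))) by (unfold w; ring).
  apply Rmult_le_compat_l; [nneg|]. clearbody w.
  pose proof (pwnn w 7 ltac:(lra)).
  destruct (Rle_dec w 1).
  - pose proof (pw1 w 5 ltac:(lra)); pose proof (pw1 w 2 ltac:(lra)); lra.
  - pose proof (pwle w 5 7 ltac:(lra) ltac:(lia)); pose proof (pwle w 2 7 ltac:(lra) ltac:(lia)); lra.
Qed.

Lemma T2b n x : 0 < n -> 0 < x -> n^3 * x <= 1 ->
  (n ^ 13 * x ^ 3 + n ^ 4) / (n ^ 23 * x ^ 9 + n ^ 2 * x ^ 2) <= 2 / (n * x ^ 3).
Proof.
  intros hn hx hw1. apply div_le_iff; try pos.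
  set (w := n^3 * x) in *. assert (hw : 0 < w) by (unfold w; pos).
  replace ((n ^ 13 * x ^ 3 + n ^ 4) * (n * x ^ 3)) with ((n^2*x^2) * (w^4 + w)) by (unfold w; ring).
  replace (2 * (n ^ 23 * x ^ 9 + n ^ 2 * x ^ 2)) with ((n^2*x^2) * (2*(w^7+1))) by (unfold w; ring).
  apply Rmult_le_compat_l; [nneg|]. clearbody w.
  pose proof (pwnn w 7 ltac:(lra)).
  pose proof (pw1 w 4 ltac:(lra)); lra.
Qed.

Definition Q n x k := (k^3 * n^15 * x^3 + k^9 * n^6) / (n^25 * x^9 + k^16 * n * x).

Lemma spoly s : 0 <= s -> (s^3 + s^9) * (1 + s)^2 <= 8 * (1 + s^16).
Proof.
  intros hs. pose proof (pwnn s 16 hs).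
  destruct (Rle_dec s 1).
  - pose proof (pw1 s 3 ltac:(lra)); pose proof (pw1 s 9 ltac:(lra)).
    assert ((1+s)^2 <= 4) by nra.
    assert (0 <= s^3) by (apply pwnn; lra). assert (0 <= s^9) by (apply pwnn; lra).
    assert ((s^3 + s^9) * (1 + s)^2 <= 2 * 4) by (apply Rmult_le_compat; nra). lra.
  - pose proof (pwle s 3 9 ltac:(lra) ltac:(lia)).
    pose proof (pwle s 11 16 ltac:(lra) ltac:(lia)).
    assert (0 <= s^3) by (apply pwnn; lra).
    assert ((1+s)^2 <= 4 * s^2) by nra.
    assert ((s^3 + s^9) * (1 + s)^2 <= (2 * s^9) * (4 * s^2)) by (apply Rmult_le_compat; nra).
    replace ((2 * s^9) * (4 * s^2)) with (8 * s^11) in H4 by ring. lra.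
Qed.

Lemma Qa n u k : 0 < n -> 0 < u -> 0 < k ->
  Q n (u^2/n) k <= 8 * (n*u) / ((n*(u^2/n))^4 * (n*u+k)^2).
Proof.
  intros hn hu hk. unfold Q.
  set (s := k / (n*u)). assert (hs : 0 <= s) by (unfold s; nneg; pos).
  assert (ek : k = s * (n*u)) by (unfold s; field; lra).
  clearbody s. subst k.
  assert (hnu : 0 < n*u) by pos.
  assert (0 < n * u + s * (n * u)) by (assert (0 <= s*(n*u)) by nneg; lra).
  assert (0 <= (s * (n * u)) ^ 16 * n * (u ^ 2 / n)) by (nneg; pos).
  assert (0 < n ^ 25 * (u ^ 2 / n) ^ 9) by pos.
  apply div_le_iff; [lra| pos|].
  replace (((s * (n * u)) ^ 3 * n ^ 15 * (u ^ 2 / n) ^ 3 + (s * (n * u)) ^ 9 * n ^ 6) *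
    ((n * (u ^ 2 / n)) ^ 4 * (n * u + s * (n * u)) ^ 2)) with
    ((n^17 * u^19) * ((s^3 + s^9) * (1 + s)^2)) by (field; lra).
  replace (8 * (n * u) * (n ^ 25 * (u ^ 2 / n) ^ 9 + (s * (n * u)) ^ 16 * n * (u ^ 2 / n)))
    with ((n^17 * u^19) * (8 * (1 + s^16))) by (field; lra).
  apply Rmult_le_compat_l; [nneg|]. apply spoly; auto.
Qed.

Lemma Qb n x k : 0 < n -> 0 < x -> n^3 * x <= 1 -> 1 <= k ->
  Q n x k <= 2 / (n * x^3 * k^2).
Proof.
  intros hn hx hw1 hk. unfold Q. apply div_le_iff; [pos|pos|].
  set (w := n^3 * x) in *. assert (hw : 0 < w) by (unfold w; pos).
  replace ((k ^ 3 * n ^ 15 * x ^ 3 + k ^ 9 * n ^ 6) * (n * x ^ 3 * k ^ 2))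
    with ((k^5 * n * x) * (w^5 + k^6 * w^2)) by (unfold w; ring).
  assert (0 <= 2 * (n^25 * x^9)) by nneg.
  replace (2 * (n ^ 25 * x ^ 9 + k ^ 16 * n * x)) with ((k^5 * n * x) * (2 * k^11) + 2 * (n^25 * x^9)) by ring.
  assert ((k^5 * n * x) * (w^5 + k^6 * w^2) <= (k^5 * n * x) * (2 * k^11)); [|lra].
  apply Rmult_le_compat_l; [nneg|]. clearbody w.
  pose proof (pw1 w 5 ltac:(lra)); pose proof (pw1 w 2 ltac:(lra)).
  pose proof (pwle k 6 11 hk ltac:(lia)). pose proof (pow_R1_Rle k 11 hk).
  assert (0 <= k^6) by (apply pwnn; lra).
  assert (k^6 * w^2 <= k^6 * 1) by (apply Rmult_le_compat_l; auto). lra.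
Qed.

Definition tm n mm k x := (k ^ 3 * n ^ 12 * mm ^ 3 * x ^ 3 + k ^ 9 * n ^ 6)
      / (n ^ 16 * mm ^ 9 * x ^ 9 + k ^ 16 * mm * x).

Lemma Q_nn n x k : 0 < n -> 0 < x -> 0 < k -> 0 <= Q n x k.
Proof. intros; unfold Q; nneg; pos. Qed.

Lemma tm_nn n mm k x : 0 < n -> 0 < mm -> 0 < x -> 0 < k -> 0 <= tm n mm k x.
Proof. intros; unfold tm; nneg; pos. Qed.

Lemma tm_bound n mm k x : 1 <= k -> 1 <= mm -> k + mm = n -> 0 < x ->
  tm n mm k x <= 2^9 * Q n x k + 2^13 * mm^2 * x^2 / n + 2^7 / (n * mm * x).
Proof.
  intros hk hm hn hx.
  assert (h2 : 0 <= 2^13 * mm^2 * x^2 / n) by (nneg; lra).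
  assert (h3 : 0 <= 2^7 / (n * mm * x)) by (nneg; pos).
  assert (h1 : 0 <= Q n x k) by (apply Q_nn; lra).
  destruct (Rle_dec (2*k) n).
  - assert (tm n mm k x <= 2^9 * Q n x k); [|lra].
    unfold tm, Q.
    replace (2 ^ 9 * ((k ^ 3 * n ^ 15 * x ^ 3 + k ^ 9 * n ^ 6) / (n ^ 25 * x ^ 9 + k ^ 16 * n * x)))
      with ((k ^ 3 * n ^ 15 * x ^ 3 + k ^ 9 * n ^ 6) / ((n ^ 25 * x ^ 9 + k ^ 16 * n * x) / 2^9))
      by (assert (0 < n ^ 25 * x ^ 9 + k ^ 16 * n * x) by pos; field; lra).
    apply frac_le; split.
    + nneg.
    + apply Rplus_le_compat_r.
      replace (k ^ 3 * n ^ 12 * mm ^ 3 * x ^ 3) with ((k ^ 3 * n ^ 12 * x ^ 3) * mm^3) by ring.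
      replace (k ^ 3 * n ^ 15 * x ^ 3) with ((k ^ 3 * n ^ 12 * x ^ 3) * n^3) by ring.
      apply Rmult_le_compat_l; [nneg|]. apply pow_incr; lra.
    + pos.
    + assert (n/2 <= mm) by lra.
      assert ((n/2)^9 <= mm^9) by (apply pow_incr; lra).
      assert (n^16 * (n/2)^9 * x^9 <= n^16 * mm^9 * x^9).
      { apply Rmult_le_compat_r; [nneg|]. apply Rmult_le_compat_l; [nneg|]. auto. }
      assert (k^16 * (n/2) * x <= k^16 * mm * x).
      { apply Rmult_le_compat_r; [nneg|]. apply Rmult_le_compat_l; [nneg|]. auto. }
      assert (0 <= k^16 * n * x) by nneg.
      replace (n^16 * (n/2)^9 * x^9) with (n^25 * x^9 / 2^9) in H1 by field.
      replace (k^16 * (n/2) * x) with (k^16 * n * x / 2) in H2 by field.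
      lra.
  - assert (tm n mm k x <= 2^13 * mm^2 * x^2 / n + 2^7 / (n * mm * x)); [|lra].
    unfold tm.
    apply Rle_trans with ((k ^ 3 * n ^ 12 * mm ^ 3 * x ^ 3 + k ^ 9 * n ^ 6) / (k ^ 16 * mm * x)).
    { apply frac_le; split; try lra; try nneg; try pos.
      assert (0 <= n ^ 16 * mm ^ 9 * x ^ 9) by nneg. lra. }
    replace ((k ^ 3 * n ^ 12 * mm ^ 3 * x ^ 3 + k ^ 9 * n ^ 6) / (k ^ 16 * mm * x))
      with ((n^12 / k^13) * (mm^2 * x^2) + (n^6/k^7) * (1 / (mm * x)))
      by (field; repeat split; lra).
    replace (2 ^ 13 * mm ^ 2 * x ^ 2 / n + 2 ^ 7 / (n * mm * x))
      with ((2^13 / n) * (mm^2 * x^2) + (2^7 / n) * (1 / (mm * x)))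
      by (field; repeat split; lra).
    apply Rplus_le_compat; (apply Rmult_le_compat_r; [nneg; pos|]);
      apply div_le_iff; try pos.
    + replace (2^13 * k^13) with ((2*k)^13) by ring.
      replace (n^12 * n) with (n^13) by ring. apply pow_incr; lra.
    + replace (2^7 * k^7) with ((2*k)^7) by ring.
      replace (n^6 * n) with (n^7) by ring. apply pow_incr; lra.
Qed.

Lemma S1 r a L : 0 < r -> (1 <= a)%nat ->
  lsum (fun k => r / (r + INR k)^2) (seq a L) <= 1.
Proof.
  intros hr ha.
  set (g := fun k : nat => r / (r + INR k - 1)).
  apply Rle_trans with (lsum (fun k => g k - g (S k)) (seq a L)).
  - apply lsum_le. intros k hk. apply in_seq in hk.
    assert (1 <= INR k) by (apply (le_INR 1); lia).
    unfold g. rewrite S_INR.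
    replace (r / (r + INR k - 1) - r / (r + (INR k + 1) - 1)) with (r / ((r + INR k - 1) * (r + INR k)))
      by (field; lra).
    apply frac_le; split; try lra; try pos; nra.
  - rewrite lsum_tele. unfold g.
    assert (1 <= INR a) by (apply (le_INR 1); lia).
    assert (0 <= INR (a + L)) by apply pos_INR.
    assert (1 <= INR (a + L)) by (apply (le_INR 1); lia).
    assert (0 <= r / (r + INR (a + L) - 1)) by (apply Rlt_le, Rdiv_lt_0_compat; lra).
    assert (r / (r + INR a - 1) <= 1); [|lra].
    apply Rle_trans with (r / r). apply frac_le; lra. right; field; lra.
Qed.

Lemma S3 a L : (2 <= a)%nat ->
  lsum (fun k => 1 / (INR k - 1) - 1 / INR k) (seq a L) <= 1.
Proof.
  intros ha.
  set (g := fun k : nat => 1 / (INR k - 1)).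
  replace (lsum (fun k => 1 / (INR k - 1) - 1 / INR k) (seq a L)) with (lsum (fun k => g k - g (S k)) (seq a L)).
  - rewrite lsum_tele. unfold g.
    assert (2 <= INR a) by (apply (le_INR 2); lia).
    assert (2 <= INR (a + L)) by (apply (le_INR 2); lia).
    assert (0 <= 1 / (INR (a + L) - 1)) by (apply Rlt_le, Rdiv_lt_0_compat; lra).
    assert (1 / (INR a - 1) <= 1); [|lra].
    apply Rle_trans with (1 / 1). apply frac_le; lra. lra.
  - unfold lsum. f_equal. apply map_ext_in. intros k hk. unfold g. rewrite S_INR. f_equal. f_equal. ring.
Qed.

Lemma ln_le_m1 y : 0 < y -> ln y <= y - 1.
Proof. intros h. pose proof (exp_ineq1_le (ln y)). rewrite exp_ln in H; lra. Qed.

Lemma ln_mono x y : 0 < x -> x <= y -> ln x <= ln y.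
Proof. intros h1 h2. destruct (Req_dec x y). subst; lra. left; apply ln_increasing; lra. Qed.

Lemma harm1 y : 1 <= y -> 1 / y <= 2 * (ln (y + 1) - ln y).
Proof.
  intros hy.
  pose proof (ln_le_m1 (y / (y + 1)) ltac:(apply Rdiv_lt_0_compat; lra)).
  unfold Rdiv in H. rewrite ln_mult in H by (try apply Rinv_0_lt_compat; lra).
  rewrite ln_Rinv in H by lra.
  assert (y * / (y + 1) - 1 = - (1 / (y+1))) by (field; lra).
  assert (1 / y <= 2 * (1 / (y + 1))).
  { replace (2 * (1 / (y + 1))) with (2 / (y + 1)) by (field; lra). apply div_le_iff; lra. }
  unfold Rdiv in *. lra.
Qed.

Lemma S2 n : (4 <= n)%nat ->
  lsum (fun j => 1 / INR (n - j)) (seq 3 (n - 3)) <= 2 * ln (INR n).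
Proof.
  intros hn.
  set (g := fun j : nat => 2 * ln (INR n - INR j + 1)).
  apply Rle_trans with (lsum (fun k => g k - g (S k)) (seq 3 (n - 3))).
  - apply lsum_le. intros k hk. apply in_seq in hk.
    rewrite minus_INR by lia. unfold g. rewrite S_INR.
    replace (INR n - (INR k + 1) + 1) with (INR n - INR k) by ring.
    assert (INR k + 1 <= INR n) by (rewrite <- S_INR; apply le_INR; lia).
    pose proof (harm1 (INR n - INR k) ltac:(lra)). lra.
  - rewrite lsum_tele. unfold g.
    replace (3 + (n - 3))%nat with n by lia.
    replace (INR n - INR n + 1) with 1 by ring. rewrite ln_1.
    assert (4 <= INR n) by (replace 4 with (INR 4) by (simpl; lra); apply le_INR; lia).
    pose proof (ln_mono (INR n - INR 3 + 1) (INR n) ltac:(simpl; lra) ltac:(simpl; lra)). lra.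
Qed.

Lemma lhs_eq f m : (4 <= m)%nat -> lhs17 f m =
  (INR m ^ 8 * f m ^ 2 + INR m ^ 2) / (INR m ^ 15 * f m ^ 7 + INR m ^ 3 * f m ^ 3)
  + (INR m ^ 13 * f m ^ 3 + INR m ^ 4) / (INR m ^ 23 * f m ^ 9 + INR m ^ 2 * f m ^ 2)
  + lsum (fun j => tm (INR m) (INR (m - j)) (INR j) (f m)) (seq 3 (m - 3)).
Proof.
  intros hm. unfold lhs17, sum_range, lsum.
  replace (S (m - 1) - 3)%nat with (m - 3)%nat by lia. reflexivity.
Qed.

Lemma sum_nn m x : (4 <= m)%nat -> 0 < x ->
  0 <= lsum (fun j => tm (INR m) (INR (m - j)) (INR j) x) (seq 3 (m - 3)).
Proof.
  intros hm hx. apply lsum_nonneg. intros j hj. apply in_seq in hj.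
  apply tm_nn; auto; apply lt_0_INR; lia.
Qed.

Lemma term_facts m j : (4 <= m)%nat -> In j (seq 3 (m - 3)) ->
  1 <= INR j /\ 3 <= INR j /\ 1 <= INR (m - j) /\ INR j + INR (m - j) = INR m /\ INR (m - j) <= INR m.
Proof.
  intros hm hj. apply in_seq in hj.
  repeat split.
  - replace 1 with (INR 1) by (simpl; lra). apply le_INR; lia.
  - replace 3 with (INR 3) by (simpl; lra). apply le_INR; lia.
  - replace 1 with (INR 1) by (simpl; lra). apply le_INR; lia.
  - rewrite <- plus_INR. f_equal. lia.
  - apply le_INR; lia.
Qed.

Lemma len_bound m : (4 <= m)%nat -> INR (length (seq 3 (m - 3))) <= INR m.
Proof. intros; rewrite length_seq; apply le_INR; lia. Qed.

Lemma sum1 m x : (4 <= m)%nat -> 0 < x ->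
  lsum (fun j => tm (INR m) (INR (m - j)) (INR j) x) (seq 3 (m - 3))
  <= 2^12 / (INR m * x)^4 + 2^13 * (INR m * x)^2 + 2^8 * ln (INR m) / (INR m * x).
Proof.
  intros hm hx.
  set (nn := INR m). assert (hnn : 4 <= nn) by (unfold nn; replace 4 with (INR 4) by (simpl; lra); apply le_INR; lia).
  set (t := nn * x). assert (ht : 0 < t) by (unfold t; pos).
  set (u := sqrt t). assert (hu : 0 < u) by (apply sqrt_lt_R0; auto).
  assert (hu2 : u^2 / nn = x) by (unfold u; rewrite pow2_sqrt by lra; unfold t; field; lra).
  apply Rle_trans with (lsum (fun j => (2^12 / t^4) * ((nn*u)/(nn*u + INR j)^2) + (2^13 * nn * x^2)
     + (2^7/(nn*x)) * (1 / INR (m - j))) (seq 3 (m-3))).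
  - apply lsum_le; intros j hj.
    destruct (term_facts m j hm hj) as [hk1 [hk3 [hmm [hsum hmn]]]].
    fold nn in hsum, hmn.
    eapply Rle_trans; [apply tm_bound; auto|].
    apply Rplus_le_compat; [apply Rplus_le_compat|].
    + pose proof (Qa nn u (INR j) ltac:(lra) hu ltac:(lra)) as HQ.
      rewrite hu2 in HQ. fold t in HQ.
      replace (2 ^ 12 / t ^ 4 * (nn * u / (nn * u + INR j) ^ 2))
        with (2^9 * (8 * (nn * u) / (t ^ 4 * (nn * u + INR j) ^ 2))).
      * apply Rmult_le_compat_l; [lra|auto].
      * assert (0 < nn * u + INR j) by (assert (0 < nn*u) by pos; lra).
        field; split; lra.
    + replace (2 ^ 13 * nn * x ^ 2) with (2^13 * nn^2 * x^2 / nn) by (field; lra).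
      apply frac_le; [split; [nneg|] | lra].
      apply Rmult_le_compat_r; [nneg|]. apply Rmult_le_compat_l; [lra|]. apply pow_incr; lra.
    + replace (2 ^ 7 / (nn * INR (m - j) * x)) with (2^7/(nn*x) * (1 / INR (m - j))) by (field; repeat split; lra).
      lra.
  - rewrite !lsum_plus, lsum_scal, lsum_const, lsum_scal.
    pose proof (S1 (nn*u) 3 (m-3) ltac:(pos) ltac:(lia)).
    pose proof (S2 m hm). fold nn in H0.
    pose proof (len_bound m hm). fold nn in H1.
    assert (0 <= 2^12 / t^4) by (apply Rlt_le; pos).
    assert (0 <= 2^7 / (nn * x)) by (apply Rlt_le; pos).
    assert (2 ^ 12 / t ^ 4 * lsum (fun j => nn * u / (nn * u + INR j) ^ 2) (seq 3 (m - 3)) <= 2^12/t^4 * 1)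
      by (apply Rmult_le_compat_l; auto).
    assert (INR (length (seq 3 (m - 3))) * (2 ^ 13 * nn * x ^ 2) <= nn * (2 ^ 13 * nn * x ^ 2))
      by (apply Rmult_le_compat_r; auto; nneg).
    assert (2 ^ 7 / (nn * x) * lsum (fun j => 1 / INR (m - j)) (seq 3 (m - 3)) <= 2 ^ 7 / (nn * x) * (2 * ln nn))
      by (apply Rmult_le_compat_l; auto).
    replace (2 ^ 13 * t ^ 2) with (nn * (2 ^ 13 * nn * x ^ 2)) by (unfold t; ring).
    replace (2 ^ 8 * ln nn / t) with (2 ^ 7 / (nn * x) * (2 * ln nn)) by (unfold t; field; lra).
    lra.
Qed.

Lemma sum2 m x : (4 <= m)%nat -> 0 < x -> INR m ^ 3 * x <= 1 ->
  lsum (fun j => tm (INR m) (INR (m - j)) (INR j) x) (seq 3 (m - 3))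
  <= 2^10 / (INR m * x^3) + 2^13 * (INR m * x)^2 + 2^8 * ln (INR m) / (INR m * x).
Proof.
  intros hm hx hw.
  set (nn := INR m) in *. assert (hnn : 4 <= nn) by (unfold nn; replace 4 with (INR 4) by (simpl; lra); apply le_INR; lia).
  apply Rle_trans with (lsum (fun j => (2^10 / (nn * x^3)) * (1 / (INR j - 1) - 1 / INR j) + (2^13 * nn * x^2)
     + (2^7/(nn*x)) * (1 / INR (m - j))) (seq 3 (m-3))).
  - apply lsum_le; intros j hj.
    destruct (term_facts m j hm hj) as [hk1 [hk3 [hmm [hsum hmn]]]].
    fold nn in hsum, hmn.
    eapply Rle_trans; [apply tm_bound; auto|].
    apply Rplus_le_compat; [apply Rplus_le_compat|].
    + pose proof (Qb nn x (INR j) ltac:(lra) hx hw hk1) as HQ.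
      apply Rle_trans with (2^9 * (2 / (nn * x ^ 3 * INR j ^ 2))).
      * apply Rmult_le_compat_l; [lra|auto].
      * replace (2 ^ 10 / (nn * x ^ 3) * (1 / (INR j - 1) - 1 / INR j))
          with (2^9 * (2 / (nn * x^3 * (INR j * (INR j - 1))))) by (field; repeat split; lra).
        apply Rmult_le_compat_l; [lra|]. apply frac_le; [lra|]. split; [pos; nneg; lra|].
        apply Rmult_le_compat_l; [nneg|]. nra.
    + replace (2 ^ 13 * nn * x ^ 2) with (2^13 * nn^2 * x^2 / nn) by (field; lra).
      apply frac_le; [split; [nneg|] | lra].
      apply Rmult_le_compat_r; [nneg|]. apply Rmult_le_compat_l; [lra|]. apply pow_incr; lra.
    + replace (2 ^ 7 / (nn * INR (m - j) * x)) with (2^7/(nn*x) * (1 / INR (m - j))) by (field; repeat split; lra).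
      lra.
  - rewrite !lsum_plus, lsum_scal, lsum_const, lsum_scal.
    pose proof (S3 3 (m-3) ltac:(lia)).
    pose proof (S2 m hm). fold nn in H0.
    pose proof (len_bound m hm). fold nn in H1.
    assert (0 <= 2^10 / (nn * x^3)) by (apply Rlt_le; pos).
    assert (0 <= 2^7 / (nn * x)) by (apply Rlt_le; pos).
    assert (2 ^ 10 / (nn * x ^ 3) * lsum (fun j => 1 / (INR j - 1) - 1 / INR j) (seq 3 (m - 3)) <= 2^10 / (nn * x^3) * 1)
      by (apply Rmult_le_compat_l; auto).
    assert (INR (length (seq 3 (m - 3))) * (2 ^ 13 * nn * x ^ 2) <= nn * (2 ^ 13 * nn * x ^ 2))
      by (apply Rmult_le_compat_r; auto; nneg).
    assert (2 ^ 7 / (nn * x) * lsum (fun j => 1 / INR (m - j)) (seq 3 (m - 3)) <= 2 ^ 7 / (nn * x) * (2 * ln nn))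
      by (apply Rmult_le_compat_l; auto).
    replace (2 ^ 13 * (nn * x) ^ 2) with (nn * (2 ^ 13 * nn * x ^ 2)) by ring.
    replace (2 ^ 8 * ln nn / (nn * x)) with (2 ^ 7 / (nn * x) * (2 * ln nn)) by (field; lra).
    lra.
Qed.

Theorem lemma17 (f : nat -> R)
  (fpos : forall n : nat, 0 < f n)
  (fO : bigO f (fun n => 1 / INR n)) :
  bigO (lhs17 f) (fun n => ln (INR n) / (INR n * f n) + 1 / (INR n ^ 4 * f n ^ 4))
  /\ (littleo f (fun n => 1 / INR n ^ 3) ->
      bigO (lhs17 f) (fun n => 1 / (INR n * f n ^ 3))).
Proof.
  destruct fO as [C [N HC]].
  split.
  - set (C1 := Rmax C 1).
    assert (hC1 : 1 <= C1) by apply Rmax_r.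
    exists (2^14 * (C1^6 + 1)), (Nat.max N 4).
    intros m hm.
    assert (hm4 : (4 <= m)%nat) by lia.
    pose proof (HC m ltac:(lia)) as HCm.
    pose proof (fpos m) as hx.
    pose proof (sum1 m (f m) hm4 hx) as HS.
    pose proof (sum_nn m (f m) hm4 hx) as HS0.
    rewrite lhs_eq by auto.
    set (nn := INR m) in *. set (x := f m) in *. set (L := ln nn) in *.
    assert (hnn : 4 <= nn) by (unfold nn; replace 4 with (INR 4) by (simpl; lra); apply le_INR; lia).
    assert (hL : 0 <= L) by (unfold L; rewrite <- ln_1; apply ln_mono; lra).
    rewrite Rabs_pos_eq in HCm by lra.
    rewrite Rabs_pos_eq in HCm by (apply Rlt_le; pos).
    assert (hxC : nn * x <= C1).
    { assert (C * (1/nn) <= C1 * (1/nn)) by (apply Rmult_le_compat_r; [apply Rlt_le; pos| apply Rmax_l]).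
      assert (x <= C1 / nn) by (unfold Rdiv; lra).
      apply (Rmult_le_compat_l nn) in H0; [|lra]. replace (nn * (C1/nn)) with C1 in H0 by (field; lra). lra. }
    set (t := nn * x) in *. assert (ht : 0 < t) by (unfold t; pos).
    pose proof (T1a nn x ltac:(lra) hx). pose proof (T2a nn x ltac:(lra) hx).
    assert (e4 : nn^4 * x^4 = t^4) by (unfold t; ring).
    rewrite e4 in *.
    assert (0 <= (nn ^ 8 * x ^ 2 + nn ^ 2) / (nn ^ 15 * x ^ 7 + nn ^ 3 * x ^ 3)) by (apply Rlt_le; pos).
    assert (0 <= (nn ^ 13 * x ^ 3 + nn ^ 4) / (nn ^ 23 * x ^ 9 + nn ^ 2 * x ^ 2)) by (apply Rlt_le; pos).
    assert (0 <= L / t) by (unfold Rdiv; apply Rmult_le_pos; [lra| apply Rlt_le; pos]).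
    assert (0 < 1 / t^4) by pos.
    rewrite Rabs_pos_eq by lra. rewrite Rabs_pos_eq by lra.
    assert (ht6 : t^6 <= C1^6) by (apply pow_incr; lra).
    assert (ht2 : t^2 <= C1^6 * (1 / t^4)).
    { replace (t^2) with (t^6 * (1/t^4)) by (field; lra). apply Rmult_le_compat_r; lra. }
    set (a := 1 / t^4) in *. set (c6 := C1^6) in *.
    assert (hc6 : 1 <= c6) by (unfold c6; apply pow_R1_Rle; lra).
    replace (2 / t^4) with (2 * a) in * by (unfold a; field; lra).
    replace (2 ^ 12 / t ^ 4) with (2^12 * a) in HS by (unfold a; field; lra).
    replace (2 ^ 8 * L / t) with (2^8 * (L / t)) in HS by (field; lra).
    assert (0 <= c6 * (L/t)) by (apply Rmult_le_pos; lra).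
    assert (0 <= c6 * a) by (apply Rmult_le_pos; lra).
    nra.
  - intros Hlo. destruct (Hlo 1 ltac:(lra)) as [N2 H2].
    exists (2^14), (Nat.max N2 4).
    intros m hm.
    assert (hm4 : (4 <= m)%nat) by lia.
    pose proof (H2 m ltac:(lia)) as HCm.
    pose proof (fpos m) as hx.
    rewrite lhs_eq by auto.
    set (nn := INR m) in *. set (x := f m) in *.
    assert (hnn : 4 <= nn) by (unfold nn; replace 4 with (INR 4) by (simpl; lra); apply le_INR; lia).
    rewrite Rabs_pos_eq in HCm by lra.
    rewrite Rabs_pos_eq in HCm by (apply Rlt_le; pos).
    assert (hw : nn^3 * x <= 1).
    { apply (Rmult_le_compat_l (nn^3)) in HCm; [|nneg]. replace (nn^3 * (1 * (1 / nn^3))) with 1 in HCm by (field; lra). lra. }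
    pose proof (sum2 m x hm4 hx hw) as HS. pose proof (sum_nn m x hm4 hx) as HS0. fold nn in HS, HS0.
    set (L := ln nn) in *.
    assert (hL : 0 <= L) by (unfold L; rewrite <- ln_1; apply ln_mono; lra).
    assert (hLn : L <= nn) by (unfold L; pose proof (ln_le_m1 nn ltac:(lra)); lra).
    pose proof (T1b nn x ltac:(lra) hx hw). pose proof (T2b nn x ltac:(lra) hx hw).
    assert (0 <= (nn ^ 8 * x ^ 2 + nn ^ 2) / (nn ^ 15 * x ^ 7 + nn ^ 3 * x ^ 3)) by (apply Rlt_le; pos).
    assert (0 <= (nn ^ 13 * x ^ 3 + nn ^ 4) / (nn ^ 23 * x ^ 9 + nn ^ 2 * x ^ 2)) by (apply Rlt_le; pos).
    assert (0 < 1 / (nn * x^3)) by pos.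
    rewrite Rabs_pos_eq by lra. rewrite Rabs_pos_eq by lra.
    set (a := 1 / (nn * x^3)) in *.
    assert (hx1 : x <= 1).
    { assert (1 <= nn^3) by (apply pow_R1_Rle; lra). nra. }
    assert (hnx : nn * x <= 1).
    { assert (nn <= nn^3) by (pose proof (pwle nn 1 3 ltac:(lra) ltac:(lia)); simpl in *; lra).
      assert (nn * x <= nn^3 * x) by (apply Rmult_le_compat_r; lra). lra. }
    assert (hA : (nn * x)^2 <= a).
    { unfold a. replace ((nn*x)^2) with ((nn^3 * x) * x^4 * (1 / (nn * x^3))) by (field; lra).
      rewrite <- (Rmult_1_l (1 / (nn * x^3))) at 2. apply Rmult_le_compat_r; [apply Rlt_le; pos|].
      pose proof (pw1 x 4 ltac:(lra)). assert (0 <= nn^3*x) by nneg.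
      replace 1 with (1*1) by ring. apply Rmult_le_compat; nneg; lra. }
    assert (hB : L / (nn * x) <= a).
    { unfold a. apply div_le_iff; [pos|pos|].
      replace (L * (nn * x^3)) with ((L * x^2) * (nn * x)) by ring.
      rewrite Rmult_1_l. rewrite <- (Rmult_1_l (nn * x)) at 2.
      apply Rmult_le_compat_r; [nneg|].
      assert (L * x^2 <= nn * x^2) by (apply Rmult_le_compat_r; nneg).
      assert (x^2 <= x) by (simpl; nra). 
      assert (nn * x^2 <= nn * x) by (apply Rmult_le_compat_l; lra). lra. }
    replace (2 / (nn * x^3)) with (2 * a) in * by (unfold a; field; lra).
    replace (2 ^ 10 / (nn * x ^ 3)) with (2^10 * a) in HS by (unfold a; field; lra).
    replace (2 ^ 8 * L / (nn * x)) with (2^8 * (L / (nn * x))) in HS by (field; lra).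
    lra.
Qed.
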